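(* If a finite semigroup $S$ is pseudo-nilpotent and its upper non-nilpotent graph $\mathcal{N}_S$ has no edges, then $S$ is nilpotent.
   Context: For a semigroup $S$, $S^1$ denotes $S$ with an identity adjoined (if $S$ has none). For $x,y\in S$ and $z_1,z_2,\ldots\in S^1$ define recursively $\lambda_0=x$, $\rho_0=y$, $\lambda_{n+1}=\lambda_n z_{n+1}\rho_n$, $\rho_{n+1}=\rho_n z_{n+1}\lambda_n$; write $\lambda_n(x,y,z_1,\ldots,z_n)$ and $\rho_n(x,y,z_1,\ldots,z_n)$. A semigroup $S$ is nilpotent (in the sense of Mal'cev) if there is a positive integer $n$ with $\lambda_n(a,b,c_1,\ldots,c_n)=\rho_n(a,b,c_1,\ldots,c_n)$ for all $a,b\in S$ and $c_1,\ldots,c_n\in S^1$. $\langle X\rangle$ denotes the subsemigroup generated by $X$. The upper non-nilpotent graph $\mathcal{N}_S$ has vertex set $S$, with an edge between $x$ and $y$ iff $\langle x,y\rangle$ is not nilpotent; ''$\mathcal{N}_S$ is empty'' means it has no edges. The empty set is regarded as an ideal; for an ideal $I$ of $S$, $S/I$ is the Rees factor semigroup, with $S/\emptyset=S$. A semigroup $S$ is pseudo-nilpotent if the following holds: whenever $x,y\in S$, $w_1,\ldots,w_m\in S^1$, $T$ is the subsemigroup generated by $x,y$ and those $w_i$ lying in $S$, $I$ is an ideal (possibly empty) of $T$, and $t<m$ are non-negative integers such that, writing $\lambda_k=\lambda_k(x,y,w_1,\ldots,w_k)$ and $\rho_k=\rho_k(x,y,w_1,\ldots,w_k)$, one has $\lambda_t\neq\rho_t$,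 $(\lambda_t,\rho_t)=(\lambda_m,\rho_m)$ and $\lambda_m,\rho_m\notin I$, then for every $0\le i\le m$ there is an edge in $\mathcal{N}_{T/I}$ between (the images of) $\lambda_i$ and $\rho_i$. *)

(* Defs.v *)
From mathcomp Require Import all_boot.
Set Implicit Arguments. Unset Strict Implicit. Unset Printing Implicit Defensive.

Section Semigroup.
Variables (U : finType) (mul : U -> U -> U).

(* multiplication by an element of S^1 : None is the adjoined identity *)
Definition mul1 (x : U) (z : option U) (y : U) : U :=
  match z with None => mul x y | Some z => mul (mul x z) y end.

(* lam_rho x y [:: z_1; ...; z_n] = (lambda_n, rho_n)(x, y, z_1, ..., z_n) *)
Fixpoint lam_rho (x y : U) (zs : seq (option U)) : U * U :=
  match zs with
  | [::] => (x, y)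
  | z :: zs' => lam_rho (mul1 x z y) (mul1 y z x) zs'
  end.

Definition lam (x y : U) zs := (lam_rho x y zs).1.
Definition rho (x y : U) zs := (lam_rho x y zs).2.

Definition mul_closed (B : {set U}) : bool :=
  [forall a in B, forall b in B, mul a b \in B].

Definition gen (X : {set U}) : {set U} :=
  [set u | [forall B : {set U}, ((X \subset B) && mul_closed B) ==> (u \in B)]].

(* the subsemigroup A (a set closed under mul) is nilpotent (Mal'cev);
   the c_i range over A^1, None being the adjoined identity *)
Definition nilpotent_in (A : {set U}) : Prop :=
  exists n : nat, 0 < n /\
    forall a b, a \in A -> b \in A ->
    forall c : seq (option U), size c = n ->
      (forall z, Some z \in c -> z \in A) ->
      lam a b c = rho a b c.

Definition nn_edge (x y : U) : Prop := ~ nilpotent_in (gen [set x; y]).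

(* I is an ideal (possibly empty) of the subsemigroup A *)
Definition is_ideal_of (A I : {set U}) : Prop :=
  I \subset A /\ forall a b, a \in I -> b \in A -> mul a b \in I /\ mul b a \in I.

End Semigroup.

Section Rees.
Variables (T : finType) (mul : T -> T -> T) (I : {set T}).

(* Rees factor multiplication on option T, None playing the role of the zero
   (the class of I); the Rees factor A/I of a subsemigroup A is carried by
   [set Some t | t in A :\: I] together with None when I is nonempty.
   When I is empty None never arises, so A/I = A. *)
Definition rees_mul (u v : option T) : option T :=
  match u, v with
  | Some a, Some b => if mul a b \in I then None else Some (mul a b)
  | _, _ => None
  end.

Definition rees_img (t : T) : option T := if t \in I then None else Some t.

End Rees.

Definition pseudo_nilpotent (T : finType) (mul : T -> T -> T) : Prop :=
  forall (x y : T) (w : seq (option T)) (I : {set T}) (t : nat),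
    let m := size w in
    let Tg := gen mul ([set x; y] :|: [set s | Some s \in w]) in
    is_ideal_of mul Tg I ->
    t < m ->
    lam mul x y (take t w) != rho mul x y (take t w) ->
    (lam mul x y (take t w), rho mul x y (take t w)) = (lam mul x y w, rho mul x y w) ->
    lam mul x y w \notin I -> rho mul x y w \notin I ->
    forall i, i <= m ->
      nn_edge (rees_mul mul I)
        (rees_img I (lam mul x y (take i w))) (rees_img I (rho mul x y (take i w))).

(* Main.v *)
Require Import Defs.
From mathcomp Require Import all_boot.
Set Implicit Arguments. Unset Strict Implicit. Unset Printing Implicit Defensive.

Section Aux.
Variables (T : finType) (mul : T -> T -> T).

Lemma lam_rho_cat x y zs zs' :
  lam_rho mul x y (zs ++ zs') =
  lam_rho mul (lam_rho mul x y zs).1 (lam_rho mul x y zs).2 zs'.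
Proof. by elim: zs x y => [|z zs IH] x y //=. Qed.

Lemma lam_rho_diag l zs : (lam_rho mul l l zs).1 = (lam_rho mul l l zs).2.
Proof. by elim: zs l => [|z zs IH] l //=. Qed.

Lemma diag_prefix x y c i :
  lam mul x y c != rho mul x y c ->
  lam mul x y (take i c) != rho mul x y (take i c).
Proof.
move=> Hne; apply/negP=> /eqP He; move/negP: Hne; apply; apply/eqP.
rewrite /lam /rho -(cat_take_drop i c) lam_rho_cat.
move: He; rewrite /lam /rho; case: (lam_rho mul x y (take i c)) => l r /= ->.
exact: lam_rho_diag.
Qed.

Lemma gen_sub (X B : {set T}) : X \subset B -> mul_closed mul B -> gen mul X \subset B.
Proof.
move=> XB cB; apply/subsetP=> u; rewrite inE => /forallP /(_ B).
by rewrite XB cB => /implyP; apply.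
Qed.

Lemma sub_gen (X : {set T}) : X \subset gen mul X.
Proof.
apply/subsetP=> u uX; rewrite inE; apply/forallP=> B; apply/implyP=> /andP[XB _].
exact: (subsetP XB).
Qed.

Lemma gen_closed (X : {set T}) : mul_closed mul (gen mul X).
Proof.
apply/forallP=> a; apply/implyP; rewrite inE => /forallP Ha.
apply/forallP=> b; apply/implyP; rewrite inE => /forallP Hb.
rewrite inE; apply/forallP=> B; apply/implyP=> HB.
move: (Ha B) (Hb B); rewrite HB /= => aB bB.
case/andP: HB => _ /forallP /(_ a) /implyP /(_ aB) /forallP /(_ b) /implyP.
by apply.
Qed.

Definition fo (o : option (option T)) : option T :=
  match o with Some (Some z) => Some z | _ => None end.

Lemma rees_lam_rho c : (forall z, Some z \in c -> z != None) ->
  forall a b, lam_rho (rees_mul mul set0) (Some a) (Some b) c =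
   (Some (lam_rho mul a b (map fo c)).1, Some (lam_rho mul a b (map fo c)).2).
Proof.
elim: c => [|o c IH] Hc a b //=.
have Hc' : forall z, Some z \in c -> z != None.
  by move=> z zc; apply: Hc; rewrite inE zc orbT.
case: o Hc => [[z|]|] Hc /=.
- by rewrite /rees_mul /= !in_set0 IH.
- by move: (Hc None); rewrite inE eqxx /= => /(_ isT).
- by rewrite /rees_mul /= !in_set0 IH.
Qed.

Lemma nil_transfer (A : {set T}) (A' : {set option T}) :
  A' \subset [set Some t | t in A] ->
  nilpotent_in mul A -> nilpotent_in (rees_mul mul set0) A'.
Proof.
move=> sA [n [n0 Hn]]; exists n; split=> // a' b' a'A b'A c sc Hc.
have hA : forall u, u \in A' -> exists2 t, t \in A & u = Some t.
  by move=> u /(subsetP sA) /imsetP.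
case: (hA _ a'A) => a aA ->; case: (hA _ b'A) => b bA ->.
have Hc' : forall z, Some z \in c -> z != None.
  by move=> z /Hc /hA [t _ ->].
rewrite /lam /rho rees_lam_rho //=.
have := Hn a b aA bA (map fo c); rewrite /lam /rho size_map => -> //.
move=> z /mapP [o oc]; case: o oc => [[t|]|] //= oc [->].
by case: (hA _ (Hc _ oc)) => t' t'A [->].
Qed.

End Aux.

Theorem lemma2p4 (T : finType) (mul : T -> T -> T) :
  associative mul ->
  pseudo_nilpotent mul ->
  (forall x y : T, ~ nn_edge mul x y) ->
  nilpotent_in mul [set: T].
Proof.
move=> _ Hpn Hne.
set n := #|{: T * T}|.
exists n.+1; split=> // a b _ _ c sc _.
case: (eqVneq (lam mul a b c) (rho mul a b c)) => // Hneq; exfalso.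
have core : forall i j, i < j -> j <= n.+1 ->
    lam_rho mul a b (take i c) = lam_rho mul a b (take j c) -> False.
  move=> i j ij jn Heq.
  have := Hpn a b (take j c) set0 i.
  rewrite /= size_takel ?sc //.
  have ideal : is_ideal_of mul (gen mul ([set a; b] :|: [set s | Some s \in take j c])) set0.
    by split; [apply: sub0set | move=> ? ? ; rewrite in_set0].
  move=> /(_ ideal ij).
  rewrite take_takel ?(ltnW ij) //.
  move=> /(_ (diag_prefix _ Hneq)).
  rewrite /lam /rho Heq => /(_ erefl) ; rewrite !in_set0 => /(_ isT isT) /(_ 0 isT).
  rewrite take0 /= /rees_img !in_set0 => Hedge.
  apply: (Hne a b) => Hnil; apply: Hedge.
  apply: (nil_transfer (A := gen mul [set a; b])) Hnil.
  apply: gen_sub.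
    by apply/subsetP=> u; rewrite !inE => /orP [] /eqP ->; apply: imset_f;
      apply: (subsetP (sub_gen mul _)); rewrite !inE eqxx ?orbT.
  apply/forallP=> u; apply/implyP=> /imsetP [x xG ->].
  apply/forallP=> v; apply/implyP=> /imsetP [y yG ->].
  rewrite /= in_set0; apply: imset_f.
  by move: (gen_closed mul [set a; b]) => /forallP /(_ x) /implyP /(_ xG)
     /forallP /(_ y) /implyP /(_ yG).
pose f (i : 'I_n.+2) := lam_rho mul a b (take i c).
have : ~~ injectiveb f.
  apply/negP => /injectiveP /leq_card; rewrite card_ord.
  by rewrite /n card_prod ltnNge ?leqnSn //= => /negP; rewrite -ltnNge ltnS leqnn.
case/injectivePn => i [j ij fij].
rewrite /f in fij.
case: (ltngtP i j) => [lt|lt|eq].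
- by apply: (core i j lt) => //; rewrite -ltnS.
- by apply: (core j i lt) => //; rewrite -ltnS.
- by move: ij; rewrite -(inj_eq val_inj) /= eq eqxx.
Qed.
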